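(* If $G$ is a group with $|G|=27$, then $cr(G)=10$.
   Context: $G$ is written additively (not necessarily commutative). For a subset $S=\{a_1,\dots,a_k\}$ of $G$, $\sum(S)$ denotes the set of all elements $a_{i_1}+\cdots+a_{i_l}$ with $1\le l\le k$ and $i_1,\dots,i_l$ pairwise distinct indices (in any order). The critical number $cr(G)$ is the smallest integer $t$ such that every subset $S\subseteq G\setminus\{0\}$ with $|S|\ge t$ satisfies $\sum(S)=G$. *)

(* Defs.v *)
From mathcomp Require Import all_boot all_fingroup.
Set Implicit Arguments. Unset Strict Implicit. Unset Printing Implicit Defensive.

(* The paper writes G additively; we use mathcomp's (multiplicative) finGroupType,
   with the group operation mulg and identity 1 playing the role of + and 0. *)

Definition in_sigma (gT : finGroupType) (S : {set gT}) (g : gT) : Prop :=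
  exists s : seq gT,
    [/\ s != [::], uniq s, {subset s <= S} & (\prod_(x <- s) x)%g = g].

Definition cr_threshold (gT : finGroupType) (t : nat) : Prop :=
  forall S : {set gT}, (1%g \notin S) -> t <= #|S| -> forall g : gT, in_sigma S g.

Definition is_cr (gT : finGroupType) (t : nat) : Prop :=
  cr_threshold gT t /\ forall t', cr_threshold gT t' -> t <= t'.

(* Main.v *)
Require Import Defs.
From mathcomp Require Import all_boot all_fingroup all_solvable.
From mathcomp Require Import zify.
Set Implicit Arguments. Unset Strict Implicit. Unset Printing Implicit Defensive.

Definition mulT (r u v w : nat) (i j : nat) : nat :=
  let a := i %/ 9 in let b := (i %/ 3) %% 3 in let c := i %% 3 in
  let a' := j %/ 9 in let b' := (j %/ 3) %% 3 in let c' := j %% 3 in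
  let A := a + a' in let car := A %/ 3 in
  let B := b + b' + u * car in
  let C := c + c' + w * b * a' + v * car + r * (B %/ 3) in
  9 * (A %% 3) + 3 * (B %% 3) + C %% 3.

Lemma mulT_lt r u v w i j : mulT r u v w i j < 27.
Proof. rewrite /mulT. lia. Qed.

Lemma mulT_div9 r u v w i j : mulT r u v w i j %/ 9 = (i %/ 9 + j %/ 9) %% 3.
Proof. rewrite /mulT. lia. Qed.

Definition setb (Q : seq bool) k := set_nth false Q k true.
Fixpoint addimg (Q : seq bool) (rr rl : seq nat) (acc : seq bool) :=
  match Q, rr, rl with
  | b :: Q', a :: rr', c :: rl' =>
      addimg Q' rr' rl' (if b then setb (setb acc a) c else acc)
  | _, _, _ => acc end.
Definition cand := (nat * seq nat * seq nat)%type.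
Definition step (e : cand) Q := let: (s, rr, rl) := e in addimg Q rr rl (setb Q s).
Definition full (Q : seq bool) := all id (take 27 Q) && (27 <= size Q).
Fixpoint chk (k : nat) (Q : seq bool) (c : seq cand) : bool :=
  if full Q then true else
  if size c < k then true else
  match k, c with
  | 0, _ => false
  | _, [::] => true
  | k'.+1, e :: c' => chk k' (step e Q) c' && chk k Q c'
  end.
Definition mkc (T : nat -> nat -> nat) (s : nat) : cand :=
  (s, [seq T j s | j <- iota 0 27], [seq T s j | j <- iota 0 27]).
Definition DFS T := chk 10 [::] (map (mkc T) (iota 1 26)).

Lemma nth_setb Q k i : nth false (setb Q k) i = (i == k) || nth false Q i.
Proof. by rewrite /setb nth_set_nth /=; case: eqP. Qed.

Lemma addimg_mono Q rr rl acc i :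
  nth false acc i -> nth false (addimg Q rr rl acc) i.
Proof.
elim: Q rr rl acc => [|b Q IH] [|a rr] [|c rl] acc //= H.
apply: IH; case: b => //; by rewrite !nth_setb H !orbT.
Qed.

Lemma addimg_spec Q rr rl acc i : nth false (addimg Q rr rl acc) i ->
  nth false acc i \/ exists j, [/\ nth false Q j, j < size rr & 
     (i = nth 0 rr j \/ i = nth 0 rl j)].
Proof.
elim: Q rr rl acc => [|b Q IH] [|a rr] [|c rl] acc //=; try by left.
move=> /IH [H|[j [Hj1 Hj2 Hj3]]]; last by right; exists j.+1.
case: b H => H; last by left.
rewrite !nth_setb in H.
case/orP: H => [/eqP ->|]; first by right; exists 0; split => //; right.
case/orP => [/eqP ->|]; first by right; exists 0; split => //; left.
by left.
Qed.

Lemma step_mono e Q i : nth false Q i -> nth false (step e Q) i.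
Proof.
case: e => [[s rr] rl] H /=; apply: addimg_mono; by rewrite nth_setb H orbT.
Qed.

Lemma fullE Q : full Q = all (fun i => nth false Q i) (iota 0 27).
Proof.
apply/idP/idP.
  move=> /andP [/(all_nthP false) H hs]; apply/allP => i; rewrite mem_iota add0n => /andP [_ li].
  have := H i; rewrite size_takel // nth_take //; exact.
move=> /allP H.
have hs : 27 <= size Q.
  rewrite leqNgt; apply/negP => lt; have := H 26; rewrite mem_iota /= nth_default //.
  by move=> /(_ isT).
rewrite /full hs andbT; apply/(all_nthP false) => i; rewrite size_takel // => li.
by rewrite nth_take //; apply: H; rewrite mem_iota.
Qed.

Lemma fullP Q i : full Q -> i < 27 -> nth false Q i.
Proof. by rewrite fullE => /allP H lt; apply: H; rewrite mem_iota. Qed.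

Lemma full_step e Q : full Q -> full (step e Q).
Proof. rewrite !fullE; apply: sub_all => i; exact: step_mono. Qed.

Lemma full_fold L Q : full Q -> full (foldl (fun Q e => step e Q) Q L).
Proof. elim: L Q => //= e L IH Q H; apply: IH; exact: full_step. Qed.

Lemma chk_spec k Q c : chk k Q c -> forall L, subseq L c -> size L = k ->
  full (foldl (fun Q e => step e Q) Q L).
Proof.
elim: c k Q => [|e c IH] k Q H L sL hL.
  move: sL; rewrite subseq0 => /eqP Ln; subst L; move: H; rewrite -hL /=.
  by case: ifP.
move: H => /=; case: ifP => [HQ _|HQ]; first exact: full_fold.
case: ifP => [lt _|_].
  have := size_subseq sL; rewrite hL /= => le; move: lt; by rewrite ltnNge le.
case: k hL => // k hL /andP [H1 H2].
case: L sL hL => [|e' L] //= sL hL.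
case: eqP sL => [->|_] sL.
  by apply: (IH _ _ H1) => //; case: hL.
exact: (IH _ _ H2 (e' :: L)).
Qed.

Definition phicheck (T : nat -> nat -> nat) :=
  all (fun i => all (fun j => T i j %/ 9 == (i %/ 9 + j %/ 9) %% 3) (iota 0 27)) (iota 0 27).

Section Generic.
Variable gT : finGroupType.
Variable T : nat -> nat -> nat.
Variable F : nat -> gT.
Hypothesis hT : forall i j, i < 27 -> j < 27 -> T i j < 27.
Hypothesis hF : forall i j, i < 27 -> j < 27 -> F (T i j) = (F i * F j)%g.
Hypothesis hinj : forall i j, i < 27 -> j < 27 -> F i = F j -> i = j.
Hypothesis hsurj : forall g, exists2 i, i < 27 & F i = g.
Hypothesis F0 : F 0 = 1%g.

Definition Inv (A : seq gT) (Q : seq bool) := forall i, nth false Q i ->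
  i < 27 /\ exists s : seq gT,
    [/\ s != [::], uniq s, {subset s <= A} & (\prod_(x <- s) x)%g = F i].

Lemma Inv_sub A B Q : {subset A <= B} -> Inv A Q -> Inv B Q.
Proof.
move=> AB H i /H [lt [s [s1 s2 s3 s4]]]; split => //; exists s; split => //.
by move=> g /s3 /AB.
Qed.

Lemma step_inv A Q e : Inv A Q -> e < 27 -> F e \notin A ->
  Inv (F e :: A) (step (mkc T e) Q).
Proof.
move=> HI he hA i /addimg_spec [].
  rewrite nth_setb => /orP [/eqP ->|/HI [lt [s [s1 s2 s3 s4]]]].
    split => //; exists [:: F e]; split => //; last by rewrite big_seq1.
    by move=> g; rewrite mem_seq1 => /eqP ->; rewrite mem_head.
  split => //; exists s; split => //; by move=> g /s3 gA; rewrite inE gA orbT.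
move=> [j [Qj]]; rewrite size_map size_iota => jlt.
have [_ [s [s1 s2 s3 s4]]] := HI j Qj.
have Fe : F e \notin s by apply/negP => /s3; apply/negP.
rewrite !(nth_map 0) ?size_iota // !nth_iota // !add0n.
have sub' : forall s', {subset s' <= s} -> {subset (F e :: s') <= F e :: A}.
  by move=> s' ss g; rewrite !inE => /orP [->//|/ss/s3 ->]; rewrite orbT.
case=> ->; split; try exact: hT.
- exists (rcons s (F e)); split.
  + by case: (s) s1.
  + by rewrite rcons_uniq Fe s2.
  + by move=> g; rewrite mem_rcons; apply: sub'.
  + by rewrite -cats1 big_cat big_seq1 /= s4 hF.
- exists (F e :: s); split => //.
  + by rewrite /= Fe s2.
  + by apply: sub'.
  + by rewrite big_cons s4 hF.
Qed.

Lemma fold_inv L A Q : Inv A Q -> all (fun e => e < 27) L ->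
  uniq (map F L ++ A) ->
  Inv (map F L ++ A) (foldl (fun Q e => step e Q) Q (map (mkc T) L)).
Proof.
elim: L A Q => //= e L IH A Q HI /andP [he hL] /andP [hn hu].
have HI' : Inv (F e :: A) (step (mkc T e) Q).
  apply: step_inv => //; apply: contra hn; rewrite mem_cat => ->; exact: orbT.
apply: (Inv_sub _ (IH _ _ HI' hL _)).
  by move=> g; rewrite !(mem_cat, inE) orbCA.
by rewrite -cat1s uniq_catCA /= hn hu.
Qed.

Lemma ub : chk 10 [::] (map (mkc T) (iota 1 26)) -> cr_threshold gT 10.
Proof.
move=> hD' S S1 S10 g.
have [idx Hidx] : {idx : seq nat | idx = [seq i <- iota 1 26 | F i \in S]} := exist _ _ erefl.
have Hsize : 10 <= size idx.
  apply: (leq_trans S10); rewrite -(size_map F).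
  apply: (@leq_trans #|[set h in map F idx]|); last by rewrite cardsE card_size.
  apply: subset_leq_card; apply/subsetP => h hS; rewrite inE; have [i lt Fi] := hsurj h.
  have i0 : i != 0 by apply: contraNneq S1 => i0; rewrite -F0 -i0 Fi.
  rewrite -Fi; apply: map_f; rewrite Hidx mem_filter Fi hS mem_iota /=; lia.
set L := take 10 idx.
have sL : subseq L (iota 1 26) by rewrite /L Hidx; exact: subseq_trans (take_subseq _ _) (filter_subseq _ _).
have HL : forall i, i \in L -> i < 27 /\ F i \in S.
  move=> i /mem_take; rewrite Hidx mem_filter mem_iota => /and3P [-> _ ?]; split=>//; lia.
have szL : size L = 10 by rewrite size_takel.
clearbody L.
have Hfull := @chk_spec 10 [::] _ hD' _ (map_subseq (mkc T) sL) (etrans (size_map _ _) szL).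
have uL : uniq L := subseq_uniq sL (iota_uniq _ _).
have uFL : uniq (map F L).
  rewrite map_inj_in_uniq // => i j /HL [hi _] /HL [hj _]; exact: hinj.
have hall : all (fun e => e < 27) L by apply/allP => i /HL [].
have Inv0 : Inv [::] [::] by move=> i; rewrite nth_nil.
have HI := fold_inv Inv0 hall; rewrite cats0 in HI; have {}HI := HI uFL.
have [i lt Fi] := hsurj g.
have := fullP Hfull lt => /HI [_ [s [s1 s2 s3 s4]]].
exists s; split => //; last by rewrite s4.
move=> h /s3 /mapP [j jL ->]; exact: (HL j jL).2.
Qed.

Definition phi (g : gT) : nat := (odflt ord0 [pick i : 'I_27 | F i == g]) %/ 9.

Lemma phiF i : i < 27 -> phi (F i) = i %/ 9.
Proof.
move=> lt; rewrite /phi; case: pickP => [k /eqP Hk|/(_ (Ordinal lt))]; last by rewrite eqxx.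
by rewrite (hinj (ltn_ord k) lt Hk).
Qed.

Hypothesis hP : phicheck T.

Lemma phiM g h : phi (g * h)%g = (phi g + phi h) %% 3.
Proof.
have [i li <-] := hsurj g; have [j lj <-] := hsurj h.
rewrite -hF // !phiF ?hT //.
have li' : i \in iota 0 27 by rewrite mem_iota.
have lj' : j \in iota 0 27 by rewrite mem_iota.
by move/allP: hP => /(_ i li') /allP /(_ j lj') /eqP.
Qed.

Lemma lb : forall t', cr_threshold gT t' -> 10 <= t'.
Proof.
move=> t' Ht; rewrite leqNgt; apply/negP => lt.
set S := [set g in map F (iota 1 9)].
have inS : forall g, g \in S -> exists2 i, i \in iota 1 9 & g = F i.
  by move=> g; rewrite inE => /mapP.
have uS : uniq (map F (iota 1 9)).
  rewrite map_inj_in_uniq ?iota_uniq // => i j; rewrite !mem_iota => /andP [_ hi] /andP [_ hj].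
  by apply: hinj; lia.
have cS : #|S| = 9 by rewrite cardsE (card_uniqP uS) size_map size_iota.
have S1 : 1%g \notin S.
  apply/negP => /inS [i]; rewrite mem_iota => /andP [h1 h2] /esym; rewrite -F0.
  move/hinj; move=> /(_ ltac:(lia) isT) i0; lia.
have [s [_ us sS ps]] := Ht S S1 ltac:(rewrite cS; lia) (F 18).
suff : forall s, {subset s <= S} -> phi (\prod_(x <- s) x)%g = (count_mem (F 9) s) %% 3.
  move=> /(_ s sS); rewrite ps phiF // count_uniq_mem //; by case: (F 9 \in s).
elim => [|a s' IH] hs; first by rewrite big_nil -F0 phiF.
rewrite big_cons phiM IH; last by move=> h hh; apply: hs; rewrite inE hh orbT.
have [i hi ->] := inS a (hs a (mem_head _ _)).
move: hi; rewrite mem_iota => /andP [h1 h2].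
rewrite phiF; last by lia.
rewrite /= modnDmr; congr (_ %% 3); congr (_ + _).
case: (eqVneq i 9) => [->|ne]; first by rewrite eqxx.
have -> : (F i == F 9) = false by apply/negP => /eqP /hinj; move=> /(_ ltac:(lia) isT); apply/eqP.
by simpl; lia.
Qed.

End Generic.

Section Build.
Variable gT : finGroupType.
Variables (x y z : gT) (r u v w : nat).
Hypothesis cz : forall g, commute z g.
Hypothesis z3 : (z ^+ 3 = 1)%g.
Hypothesis y3 : (y ^+ 3 = z ^+ r)%g.
Hypothesis yx : (y * x = x * y * z ^+ w)%g.
Hypothesis x3 : (x ^+ 3 = y ^+ u * z ^+ v)%g.

Definition F0 (i : nat) : gT := (x ^+ (i %/ 9) * y ^+ ((i %/ 3) %% 3) * z ^+ (i %% 3))%g.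

Lemma czn n g : commute (z ^+ n) g.
Proof. exact/commute_sym/commuteX/commute_sym/cz. Qed.

Lemma zmod n : (z ^+ n = z ^+ (n %% 3))%g.
Proof. by rewrite (expg_mod _ z3). Qed.

Lemma yred n : (y ^+ n = y ^+ (n %% 3) * z ^+ (r * (n %/ 3)))%g.
Proof.
rewrite {1}(divn_eq n 3) expgnDr mulnC expgnA y3 -expgnA.
exact: czn.
Qed.

Lemma xred n : (x ^+ n = x ^+ (n %% 3) * y ^+ (u * (n %/ 3)) * z ^+ (v * (n %/ 3)))%g.
Proof.
rewrite {1}(divn_eq n 3) addnC expgnDr mulnC expgnA x3 expgMn; last exact/commute_sym/czn.
by rewrite -!expgnA mulgA.
Qed.

Lemma yx1 b : (y ^+ b * x = x * y ^+ b * z ^+ (w * b))%g.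
Proof.
elim: b => [|b IH]; first by rewrite !expg0 muln0 expg0 !mulg1 mul1g.
rewrite expgS -mulgA IH !mulgA yx -(mulgA _ (z ^+ w)%g) (czn w (y ^+ b)%g).
by rewrite !mulgA -(mulgA _ (z ^+ w)%g) -expgnDr mulnS.
Qed.

Lemma yxp b a : (y ^+ b * x ^+ a = x ^+ a * y ^+ b * z ^+ (w * b * a))%g.
Proof.
elim: a => [|a IH]; first by rewrite !expg0 muln0 expg0 !mulg1 mul1g.
rewrite expgSr mulgA IH -mulgA (czn _ x) !mulgA -(mulgA _ (y ^+ b)%g) yx1.
by rewrite !mulgA -expgSr -mulgA -expgnDr mulnS addnC.
Qed.

Lemma F0M i j : (F0 i * F0 j = F0 (mulT r u v w i j))%g.
Proof.
rewrite /F0 /mulT.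
set a := i %/ 9; set b := (i %/ 3) %% 3; set c := i %% 3.
set a' := j %/ 9; set b' := (j %/ 3) %% 3; set c' := j %% 3.
set A := a + a'; set car := A %/ 3; set B := b + b' + u * car.
set C := c + c' + w * b * a' + v * car + r * (B %/ 3).
have -> : (9 * (A %% 3) + 3 * (B %% 3) + C %% 3) %/ 9 = A %% 3 by lia.
have -> : ((9 * (A %% 3) + 3 * (B %% 3) + C %% 3) %/ 3) %% 3 = B %% 3 by lia.
have -> : (9 * (A %% 3) + 3 * (B %% 3) + C %% 3) %% 3 = C %% 3 by lia.
rewrite -zmod.
rewrite -!mulgA (czn c) !mulgA -(mulgA _ (y ^+ b)%g) yxp.
rewrite !mulgA -(mulgA _ (z ^+ (w * b * a'))%g) (czn _ (y ^+ b')%g).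
rewrite !mulgA -expgnDr -/A -(mulgA _ (y ^+ b)%g) -expgnDr.
rewrite (xred A) -/car.
rewrite -(mulgA _ (z ^+ (v * car))%g) (czn _ (y ^+ (b + b'))%g) !mulgA.
rewrite -(mulgA _ (y ^+ (u * car))%g) -expgnDr.
rewrite (yred (u * car + (b + b'))).
have -> : u * car + (b + b') = B by rewrite /B; lia.
rewrite -!mulgA; congr (_ * (_ * _))%g.
rewrite -!expgnDr; congr (_ ^+ _)%g; rewrite /C; lia.
Qed.

End Build.

Lemma dvd27a n : n %| 27 -> 3 < n -> 9 <= n.
Proof.
move=> d; have : n \in divisors 27 by rewrite -dvdn_divisors.
have -> : divisors 27 = [:: 1; 3; 9; 27] by vm_compute.
by rewrite !inE => /or4P [] /eqP ->.
Qed.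

Lemma dvd27b n : n %| 27 -> 9 < n -> n = 27.
Proof.
move=> d; have : n \in divisors 27 by rewrite -dvdn_divisors.
have -> : divisors 27 = [:: 1; 3; 9; 27] by vm_compute.
by rewrite !inE => /or4P [] /eqP ->.
Qed.

Section Surj.
Variable gT : finGroupType.
Variables (x y z : gT) (r u v w : nat).
Hypothesis cz : forall g, commute z g.
Hypothesis z3 : (z ^+ 3 = 1)%g.
Hypothesis y3 : (y ^+ 3 = z ^+ r)%g.
Hypothesis yx : (y * x = x * y * z ^+ w)%g.
Hypothesis x3 : (x ^+ 3 = y ^+ u * z ^+ v)%g.
Hypothesis oz : #[z]%g = 3.
Hypothesis card27 : #|gT| = 27.
Hypothesis ynZ : y \notin <[z]>%g.
Hypothesis xnK : x \notin [set F0 x y z i | i : 'I_9].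

Let F := F0 x y z.
Let FM i j : (F i * F j = F (mulT r u v w i j))%g := F0M cz z3 y3 yx x3 i j.

Lemma F00 : F 0 = 1%g.
Proof. by rewrite /F /F0 !expg0 !mulg1. Qed.

Lemma Im_group : group_set [set F i | i : 'I_27].
Proof.
apply/group_setP; split.
  by apply/imsetP; exists ord0 => //; rewrite F00.
move=> g h /imsetP [i _ ->] /imsetP [j _ ->]; rewrite FM.
by apply/imsetP; exists (Ordinal (mulT_lt r u v w i j)).
Qed.

Lemma K_group : group_set [set F i | i : 'I_9].
Proof.
apply/group_setP; split.
  by apply/imsetP; exists ord0 => //; rewrite F00.
move=> g h /imsetP [i _ ->] /imsetP [j _ ->]; rewrite FM.
have lt : mulT r u v w i j < 9.
  have := mulT_div9 r u v w i j; have := ltn_ord i; have := ltn_ord j; lia.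
by apply/imsetP; exists (Ordinal lt).
Qed.

Lemma F0_bij : (forall g, exists2 i, i < 27 & F i = g) /\
  (forall i j, i < 27 -> j < 27 -> F i = F j -> i = j).
Proof.
pose ImG := Group Im_group; pose KG := Group K_group.
have cZ : #|<[z]>%G| = 3 by [].
have ZK : <[z]>%G \proper KG.
  have zK : z \in KG.
    change (z \in [set F i | i : 'I_9]); apply/imsetP; exists (Ordinal (isT : 1 < 9)) => //.
    rewrite /F /F0 /= (_ : 1 %/ 9 = 0) // (_ : (1 %/ 3) %% 3 = 0) // (_ : 1 %% 3 = 1) //.
    by rewrite !expg0 !mul1g expg1.
  apply/properP; split; first by move: zK; rewrite -cycle_subG.
  exists y => //; change (y \in [set F i | i : 'I_9]); apply/imsetP; exists (Ordinal (isT : 3 < 9)) => //.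
  rewrite /F /F0 /= (_ : 3 %/ 9 = 0) // (_ : (3 %/ 3) %% 3 = 1) // (_ : 3 %% 3 = 0) //.
  by rewrite !expg0 mul1g mulg1 expg1.
have KI : KG \proper ImG.
  apply/properP; split.
    apply/subsetP => g; change (g \in [set F i | i : 'I_9] -> g \in [set F i | i : 'I_27]).
    move=> /imsetP [i _ ->]; apply/imsetP.
    by exists (widen_ord (isT : 9 <= 27) i).
  exists x => //; change (x \in [set F i | i : 'I_27]); apply/imsetP; exists (Ordinal (isT : 9 < 27)) => //.
  rewrite /F /F0 /= (_ : 9 %/ 9 = 1) // (_ : (9 %/ 3) %% 3 = 0) // (_ : 9 %% 3 = 0) //.
  by rewrite !expg0 !mulg1 expg1.
have d27 : forall H : {group gT}, #|H| %| 27.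
  by move=> H; rewrite -card27 -cardsT; apply: cardSg; apply: subsetT.
have cK : 9 <= #|KG| by apply: dvd27a (d27 _) _; rewrite -cZ; apply: proper_card.
have cI : #|ImG| = 27.
  by apply: dvd27b (d27 _) _; exact: leq_ltn_trans cK (proper_card KI).
split.
  move=> g; have : g \in ImG.
    have -> : (ImG : {set gT}) = setT.
      by apply/eqP; rewrite eqEcard subsetT cardsT card27 cI.
    by rewrite inE.
  by change (g \in [set F i | i : 'I_27] -> exists2 i, i < 27 & F i = g); move=> /imsetP [i _ ->]; exists i.
have := imset_injP (f := fun i : 'I_27 => F i) (D := 'I_27).
rewrite card_ord -[#|[set _ | _ in _]|]/#|ImG| cI eqxx => /(_ isT) /= Hinj.
move=> i j li lj Fij.
by have := Hinj (Ordinal li) (Ordinal lj) isT isT Fij => -[].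
Qed.

End Surj.

Definition P4 := (nat * nat * nat * nat)%type.
Definition mT (p : P4) : nat -> nat -> nat := let: (r, u, v, w) := p in mulT r u v w.
Lemma mT_lt p i j : mT p i j < 27.
Proof. by case: p => [[[r u] v] w]; apply: mulT_lt. Qed.

Definition isoOK (R T : nat -> nat -> nat) (s : seq nat) :=
  [&& perm_eq s (iota 0 27), nth 0 s 0 == 0 &
   all (fun i => all (fun j => nth 0 s (R i j) == T (nth 0 s i) (nth 0 s j))
     (iota 0 27)) (iota 0 27)].

Definition tups : seq P4 := [:: (0,1,0,0); (1,1,0,0); (2,1,0,0); (0,0,0,0); (0,0,0,1); (0,0,0,2); (0,0,1,0); (0,0,1,1); (0,0,1,2); (0,0,2,0); (0,0,2,1); (0,0,2,2); (1,0,0,0); (1,0,0,1); (1,0,0,2); (1,0,1,0); (1,0,1,1); (1,0,1,2); (1,0,2,0); (1,0,2,1); (1,0,2,2); (2,0,0,0); (2,0,0,1); (2,0,0,2); (2,0,1,0); (2,0,1,1); (2,0,1,2); (2,0,2,0); (2,0,2,1); (2,0,2,2)].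
Definition reps : seq P4 := [:: (0,1,0,0); (1,1,0,0); (0,0,0,0); (0,0,0,1); (0,0,1,1)].
Definition certs : seq (P4 * P4 * seq nat) := [::
  ((0,1,0,0), (0,1,0,0), iota 0 27);
  ((1,1,0,0), (1,1,0,0), iota 0 27);
  ((2,1,0,0), (1,1,0,0), [:: 0; 2; 1; 3; 5; 4; 6; 8; 7; 9; 11; 10; 12; 14; 13; 15; 17; 16; 18; 20; 19; 21; 23; 22; 24; 26; 25]);
  ((0,0,0,0), (0,0,0,0), iota 0 27);
  ((0,0,0,1), (0,0,0,1), iota 0 27);
  ((0,0,0,2), (0,0,0,1), [:: 0; 1; 2; 9; 10; 11; 18; 19; 20; 3; 4; 5; 14; 12; 13; 22; 23; 21; 6; 7; 8; 16; 17; 15; 26; 24; 25]);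
  ((0,0,1,0), (0,1,0,0), [:: 0; 3; 6; 1; 4; 7; 2; 5; 8; 9; 12; 15; 10; 13; 16; 11; 14; 17; 18; 21; 24; 19; 22; 25; 20; 23; 26]);
  ((0,0,1,1), (0,0,1,1), iota 0 27);
  ((0,0,1,2), (0,0,1,1), [:: 0; 1; 2; 6; 7; 8; 3; 4; 5; 9; 10; 11; 15; 16; 17; 12; 13; 14; 18; 19; 20; 24; 25; 26; 21; 22; 23]);
  ((0,0,2,0), (0,1,0,0), [:: 0; 3; 6; 2; 5; 8; 1; 4; 7; 9; 12; 15; 11; 14; 17; 10; 13; 16; 18; 21; 24; 20; 23; 26; 19; 22; 25]);
  ((0,0,2,1), (0,0,1,1), [:: 0; 2; 1; 6; 8; 7; 3; 5; 4; 9; 11; 10; 15; 17; 16; 12; 14; 13; 18; 20; 19; 24; 26; 25; 21; 23; 22]);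
  ((0,0,2,2), (0,0,1,1), [:: 0; 2; 1; 3; 5; 4; 6; 8; 7; 9; 11; 10; 12; 14; 13; 15; 17; 16; 18; 20; 19; 21; 23; 22; 24; 26; 25]);
  ((1,0,0,0), (0,1,0,0), [:: 0; 9; 18; 1; 10; 19; 2; 11; 20; 3; 12; 21; 4; 13; 22; 5; 14; 23; 6; 15; 24; 7; 16; 25; 8; 17; 26]);
  ((1,0,0,1), (0,0,1,1), [:: 0; 1; 2; 18; 19; 20; 9; 10; 11; 3; 4; 5; 23; 21; 22; 13; 14; 12; 6; 7; 8; 25; 26; 24; 17; 15; 16]);
  ((1,0,0,2), (0,0,1,1), [:: 0; 1; 2; 9; 10; 11; 18; 19; 20; 3; 4; 5; 14; 12; 13; 22; 23; 21; 6; 7; 8; 16; 17; 15; 26; 24; 25]);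
  ((1,0,1,0), (0,1,0,0), [:: 0; 15; 22; 1; 16; 23; 2; 17; 21; 3; 10; 25; 4; 11; 26; 5; 9; 24; 6; 13; 20; 7; 14; 18; 8; 12; 19]);
  ((1,0,1,1), (0,0,1,1), [:: 0; 1; 2; 21; 22; 23; 15; 16; 17; 3; 4; 5; 26; 24; 25; 11; 9; 10; 6; 7; 8; 20; 18; 19; 12; 13; 14]);
  ((1,0,1,2), (0,0,1,1), [:: 0; 1; 2; 15; 16; 17; 23; 21; 22; 3; 4; 5; 9; 10; 11; 24; 25; 26; 6; 7; 8; 14; 12; 13; 20; 18; 19]);
  ((1,0,2,0), (0,1,0,0), [:: 0; 12; 24; 1; 13; 25; 2; 14; 26; 3; 15; 19; 4; 16; 20; 5; 17; 18; 6; 10; 22; 7; 11; 23; 8; 9; 21]);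
  ((1,0,2,1), (0,0,1,1), [:: 0; 1; 2; 24; 25; 26; 13; 14; 12; 3; 4; 5; 18; 19; 20; 17; 15; 16; 6; 7; 8; 23; 21; 22; 10; 11; 9]);
  ((1,0,2,2), (0,0,1,1), [:: 0; 1; 2; 12; 13; 14; 26; 24; 25; 3; 4; 5; 17; 15; 16; 19; 20; 18; 6; 7; 8; 11; 9; 10; 23; 21; 22]);
  ((2,0,0,0), (0,1,0,0), [:: 0; 9; 18; 2; 11; 20; 1; 10; 19; 3; 12; 21; 5; 14; 23; 4; 13; 22; 6; 15; 24; 8; 17; 26; 7; 16; 25]);
  ((2,0,0,1), (0,0,1,1), [:: 0; 2; 1; 9; 11; 10; 18; 20; 19; 3; 5; 4; 13; 12; 14; 23; 22; 21; 6; 8; 7; 17; 16; 15; 25; 24; 26]);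
  ((2,0,0,2), (0,0,1,1), [:: 0; 2; 1; 18; 20; 19; 9; 11; 10; 3; 5; 4; 22; 21; 23; 14; 13; 12; 6; 8; 7; 26; 25; 24; 16; 15; 17]);
  ((2,0,1,0), (0,1,0,0), [:: 0; 12; 24; 2; 14; 26; 1; 13; 25; 3; 15; 20; 5; 17; 19; 4; 16; 18; 6; 11; 23; 8; 10; 22; 7; 9; 21]);
  ((2,0,1,1), (0,0,1,1), [:: 0; 2; 1; 12; 14; 13; 25; 24; 26; 3; 5; 4; 16; 15; 17; 20; 19; 18; 6; 8; 7; 10; 9; 11; 22; 21; 23]);
  ((2,0,1,2), (0,0,1,1), [:: 0; 2; 1; 24; 26; 25; 14; 13; 12; 3; 5; 4; 18; 20; 19; 16; 15; 17; 6; 8; 7; 22; 21; 23; 11; 10; 9]);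
  ((2,0,2,0), (0,1,0,0), [:: 0; 15; 23; 2; 17; 22; 1; 16; 21; 3; 11; 26; 5; 10; 25; 4; 9; 24; 6; 14; 19; 8; 13; 18; 7; 12; 20]);
  ((2,0,2,1), (0,0,1,1), [:: 0; 2; 1; 15; 17; 16; 22; 21; 23; 3; 5; 4; 9; 11; 10; 24; 26; 25; 6; 8; 7; 13; 12; 14; 19; 18; 20]);
  ((2,0,2,2), (0,0,1,1), [:: 0; 2; 1; 21; 23; 22; 15; 17; 16; 3; 5; 4; 25; 24; 26; 10; 9; 11; 6; 8; 7; 19; 18; 20; 12; 14; 13])].

Lemma certs_ok : all (fun tp => has (fun e =>
   [&& e.1.1 == tp, e.1.2 \in reps & isoOK (mT e.1.2) (mT tp) e.2]) certs) tups.
Proof. by vm_compute. Qed.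

Lemma reps_phi : all (fun p => phicheck (mT p)) reps.
Proof. by vm_compute. Qed.

Lemma reps_dfs : all (fun p => chk 10 [::] (map (mkc (mT p)) (iota 1 26))) reps.
Proof. by vm_compute. Qed.

Lemma transfer (gT : finGroupType) (T R : nat -> nat -> nat) (G : nat -> gT) s :
  (forall i j, i < 27 -> j < 27 -> G (T i j) = (G i * G j)%g) ->
  (forall g, exists2 i, i < 27 & G i = g) ->
  (forall i j, i < 27 -> j < 27 -> G i = G j -> i = j) ->
  G 0 = 1%g -> isoOK R T s ->
  [/\ (forall i j, i < 27 -> j < 27 -> G (nth 0 s (R i j)) = (G (nth 0 s i) * G (nth 0 s j))%g),
      (forall g, exists2 i, i < 27 & G (nth 0 s i) = g),
      (forall i j, i < 27 -> j < 27 -> G (nth 0 s i) = G (nth 0 s j) -> i = j) &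
      G (nth 0 s 0) = 1%g].
Proof.
move=> hG sG iG G0 /and3P [ps /eqP s0 hs].
have sz : size s = 27 by rewrite (perm_size ps) size_iota.
have us : uniq s by rewrite (perm_uniq ps) iota_uniq.
have lts : forall i, i < 27 -> nth 0 s i < 27.
  move=> i li; have : nth 0 s i \in iota 0 27 by rewrite -(perm_mem ps) mem_nth ?sz.
  by rewrite mem_iota.
split.
- move=> i j li lj.
  have li' : i \in iota 0 27 by rewrite mem_iota.
  have lj' : j \in iota 0 27 by rewrite mem_iota.
  move/allP: hs => /(_ i li') /allP /(_ j lj') /eqP ->.
  by rewrite hG ?lts.
- move=> g; have [k lk <-] := sG g.
  have ks : k \in s by rewrite (perm_mem ps) mem_iota.
  exists (index k s); first by rewrite -sz index_mem.
  by rewrite nth_index.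
- move=> i j li lj /iG => /(_ (lts i li) (lts j lj)) /eqP.
  by rewrite nth_uniq ?sz // => /eqP.
- by rewrite s0.
Qed.

Section BuildS.
Local Open Scope group_scope.
Lemma build (gT : finGroupType) : #|gT| = 27 -> exists2 tp, tp \in tups &
  exists G : nat -> gT,
  [/\ (forall i j, i < 27 -> j < 27 -> G (mT tp i j) = (G i * G j)%g),
      (forall g, exists2 i, i < 27 & G i = g),
      (forall i j, i < 27 -> j < 27 -> G i = G j -> i = j) & G 0 = 1%g].
Proof.
move=> c27.
have pG : (3.-group [set: gT])%g.
  by rewrite /pgroup cardsT c27 (_ : 27 = (3 ^ 3)%N) // pnatX pnat_id.
have ntZ : 'Z([set: gT]%G) != 1%g.
  apply/eqP => hZ; have := trivg_center_pgroup pG hZ.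
  move/(congr1 (fun A : {set gT} => #|A|)); by rewrite /= cardsT cards1 c27.
have [_ d3 _] := pgroup_pdiv (pgroupS (center_sub _) pG) ntZ.
have [z Zz oz] := Cauchy (isT : prime 3) d3.
have cz : forall g, commute z g.
  by move: Zz => /centerP [_ cen] g; apply: cen; apply: in_setT.
have z3 : (z ^+ 3 = 1)%g by rewrite -oz expg_order.
have cZ : #|<[z]>| = 3 by [].
have nZ : [set: gT] \subset 'N(<[z]>).
  apply: normal_norm; apply: (sub_center_normal (H := <[z]>%G) (G := [set: gT]%G)).
  by rewrite cycle_subG.
have cQ : #|[set: gT] / <[z]>| = 9.
  rewrite card_quotient //; have := Lagrange (subsetT <[z]>); rewrite cZ cardsT c27 => h.
  by apply/eqP; rewrite -(eqn_pmul2l (isT : 0 < 3)); apply/eqP; exact: h.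
have abQ : abelian ([set: gT] / <[z]>) by apply: (card_p2group_abelian (isT : prime 3)); rewrite cQ.
have comm : forall a b, ([~ a, b] \in <[z]>)%g.
  move=> a b; have := der1_min (G := [set: gT]%G) (H := <[z]>%G) nZ abQ.
  rewrite derg1 => /subsetP; apply; apply: mem_commg; exact: in_setT.
have pow9 : forall g, (g ^+ 9 \in <[z]>)%g.
  move=> g; have gN : g \in 'N(<[z]>) by apply: (subsetP nZ); apply: in_setT.
  apply: coset_idr; first by rewrite groupX.
  rewrite (morphX (coset_morphism <[z]>) 9 gN) /= -cQ; apply: expg_cardG.
  by apply: mem_quotient; apply: in_setT.
have zpow : forall h, h \in <[z]> -> exists2 k, k < 3 & h = (z ^+ k)%g.
  move=> h /cycleP [i ->]; exists (i %% 3); first by rewrite ltn_mod.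
  by rewrite (expg_mod _ z3).
case: (boolP [exists g, (g ^+ 3)%g \notin <[z]>]) => [/existsP [g g3]|/existsPn Hall].
- pose y := (g ^+ 3)%g.
  have [r lr y3] : exists2 r, r < 3 & (y ^+ 3 = z ^+ r)%g.
    by apply: zpow; rewrite /y -expgnA; exact: pow9.
  have yx : (y * g = g * y * z ^+ 0)%g.
    by rewrite expg0 mulg1; apply: commute_sym; apply: commuteX.
  have x3 : (g ^+ 3 = y ^+ 1 * z ^+ 0)%g by rewrite expg1 expg0 mulg1.
  have xnK : g \notin [set F0 g y z i | i : 'I_9].
    apply/imsetP => -[i _ Hi]; move: g3; rewrite Hi /F0 divn_small ?ltn_ord // expg0 mul1g.
    rewrite expgMn; last exact: commute_sym (czn cz _ _).
    move=> /negP; apply; rewrite groupM //; last by rewrite -expgnA groupX // cycle_id.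
    by rewrite -expgnA mulnC expgnA y3 groupX // groupX // cycle_id.
  have [sj inj] := F0_bij cz z3 y3 yx x3 oz c27 g3 xnK.
  exists (r, 1%N, 0%N, 0%N).
    by clear -lr; move: lr; case: r => [|[|[|r]]].
  exists (F0 g y z); split => //.
  + by move=> i j _ _; rewrite /mT (F0M cz z3 y3 yx x3).
  + exact: F00.
- have Hall' : forall g, ((g ^+ 3)%g \in <[z]>) by move=> g; apply: negbNE; apply: Hall.
  have : ~~ ([set: gT] \subset <[z]>).
    by apply/negP => /subset_leq_card; rewrite cardsT c27 cZ.
  move=> /subsetPn [y _ ynZ].
  have : ~~ ([set: gT] \subset [set (y ^+ (i %/ 3) * z ^+ (i %% 3))%g | i : 'I_9]).
    apply/negP => /subset_leq_card; rewrite cardsT c27 => le.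
    by have := leq_trans le (leq_imset_card _ _); rewrite card_ord.
  move=> /subsetPn [x _ xnK0].
  have [r lr y3] := zpow _ (Hall' y).
  have [v lv x3'] := zpow _ (Hall' x).
  have [w lw cw] := zpow _ (comm y x).
  have yx : (y * x = x * y * z ^+ w)%g by rewrite -cw commgC.
  have x3 : (x ^+ 3 = y ^+ 0 * z ^+ v)%g by rewrite expg0 mul1g.
  have xnK : x \notin [set F0 x y z i | i : 'I_9].
    apply/imsetP => -[i _ Hi]; move/negP: xnK0; apply; apply/imsetP; exists i => //.
    rewrite Hi /F0 divn_small ?ltn_ord // expg0 mul1g modn_small //.
    have := ltn_ord i; lia.
  have [sj inj] := F0_bij cz z3 y3 yx x3 oz c27 ynZ xnK.
  exists (r, 0%N, v, w).
    clear -lr lv lw; move: lr lv lw; case: r => [|[|[|r]]] //; case: v => [|[|[|v]]] //;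
      case: w => [|[|[|w]]] //.
  exists (F0 x y z); split => //.
  + by move=> i j _ _; rewrite /mT (F0M cz z3 y3 yx x3).
  + exact: F00.
Qed.
End BuildS.

Theorem lemma2p6 (gT : finGroupType) : #|gT| = 27 -> is_cr gT 10.
Proof.
move=> c27.
have [tp htp [G [hG sG iG G0]]] := build c27.
have /hasP [[[tp' rp] s] he /and3P [/eqP /= etp hrp hiso]] := allP certs_ok tp htp.
have [hF sF iF F0'] := transfer hG sG iG G0 hiso.
have hT : forall i j, i < 27 -> j < 27 -> mT rp i j < 27 by move=> *; apply: mT_lt.
split.
- apply: (ub (T := mT rp) (F := fun i => G (nth 0 s i))) => //.
  exact: (allP reps_dfs rp hrp).
- apply: (lb (T := mT rp) (F := fun i => G (nth 0 s i))) => //.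
  exact: (allP reps_phi rp hrp).
Qed.
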